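(* Let $X,Y$ be $d\times d$ complex matrices with $\|X\|_\infty+\|Y\|_\infty<\log2$. Let $M:=\max\{\|X\|_\infty,\|Y\|_\infty\}$ and $\varepsilon:=\|X+Y\|_F$. Then for every $r\ge1$, $$\|\mathrm{BCH}_r(X,Y)\|_F\le C_rM^{r-1}\varepsilon,\qquad C_r:=\frac{2^{2r-1}r^r}{r!}\le(4e)^r.$$
   Context: $\|A\|_F:=\sqrt{\operatorname{Tr}(A^\dagger A)/d}$ is the normalized Frobenius norm and $\|\cdot\|_\infty$ the operator norm. $\mathrm{BCH}_r(X,Y)$ is the degree-$r$ homogeneous term of the Baker–Campbell–Hausdorff series $\log(e^Xe^Y)=\sum_{r\ge1}\mathrm{BCH}_r(X,Y)$, given by Dynkin's formula $$\mathrm{BCH}_r(X,Y)=\sum_{n=1}^r\frac{(-1)^{n-1}}{n}\sum_{\substack{r_i,s_i\ge0,\ r_i+s_i>0\\ \sum_{i=1}^n(r_i+s_i)=r}}\frac{[X^{r_1}Y^{s_1}\cdots X^{r_n}Y^{s_n}]}{r\prod_{i=1}^n r_i!\,s_i!},$$ where $[Z_1Z_2\cdots Z_r]:=[Z_1,[Z_2,\dots,[Z_{r-1},Z_r]\dots]]$ is the left-normed commutator of the word consisting of $r_1$ copies of $X$, then $s_1$ copies of $Y$, etc. (with $[Z_1]:=Z_1$). *)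

(* Defs.v *)
From HB Require Import structures.
From mathcomp Require Import all_boot all_order all_algebra.
From mathcomp Require Import complex.
From mathcomp Require Import all_classical all_reals all_analysis.
Set Implicit Arguments. Unset Strict Implicit. Unset Printing Implicit Defensive.
Import Order.TTheory GRing.Theory Num.Theory.
Local Open Scope ring_scope.

Section BCHDefs.
Variable R : realType.
Local Notation C := (R[i]).

Definition cabs2 (z : C) : R := complex.Re z ^+ 2 + complex.Im z ^+ 2.

Definition vnorm d (v : 'cV[C]_d) : R :=
  Num.sqrt (\sum_(i < d) cabs2 (v i ord0)).

Definition opnorm d (A : 'M[C]_d) : R :=
  sup [set vnorm (A *m v) | v in [set v : 'cV[C]_d | vnorm v <= 1]]%classic.

(* normalized Frobenius norm ||A||_F = sqrt(Tr(A^dagger A)/d),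
   with Tr(A^dagger A) = sum_{i,j} |A_ij|^2 *)
Definition frobN d (A : 'M[C]_d) : R :=
  Num.sqrt ((\sum_(i < d) \sum_(j < d) cabs2 (A i j)) / d%:R).

Definition comm d (A B : 'M[C]_d) : 'M[C]_d := A *m B - B *m A.

(* left-normed commutator [Z1 Z2 ... Zr] := [Z1,[Z2,...,[Z_{r-1},Z_r]...]],
   [Z1] := Z1 (and the empty word gives 0, never used) *)
Fixpoint lnc d (s : seq 'M[C]_d) : 'M[C]_d :=
  match s with
  | [::] => 0
  | [:: z] => z
  | z :: s' => comm z (lnc s')
  end.

(* the word X^{r_1} Y^{s_1} ... X^{r_n} Y^{s_n}, for f i = (r_i, s_i) *)
Definition bch_word d r n (X Y : 'M[C]_d)
  (f : {ffun 'I_n -> 'I_r.+1 * 'I_r.+1}) : seq 'M[C]_d :=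
  flatten [seq nseq (f i).1 X ++ nseq (f i).2 Y | i <- enum 'I_n].

(* admissible exponent tuples: r_i + s_i > 0 and sum (r_i + s_i) = r
   (each r_i, s_i is then automatically <= r, so 'I_r.+1 loses nothing) *)
Definition bch_adm r n (f : {ffun 'I_n -> 'I_r.+1 * 'I_r.+1}) : bool :=
  [forall i, (0 < (f i).1 + (f i).2)%N] &&
  ((\sum_(i < n) ((f i).1 + (f i).2))%N == r).

(* Dynkin's formula for the degree-r homogeneous BCH term *)
Definition BCH d (r : nat) (X Y : 'M[C]_d) : 'M[C]_d :=
  \sum_(n < r.+1 | (0 < n)%N)
    \sum_(f : {ffun 'I_n -> 'I_r.+1 * 'I_r.+1} | bch_adm f)
      (((-1) ^+ n.-1 / n%:R) /
        (r%:R * \prod_(i < n) (((f i).1)`!%:R * ((f i).2)`!%:R)) : C)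
        *: lnc (bch_word X Y f).

Definition Cconst (r : nat) : R := (2 ^+ (2 * r).-1 * r%:R ^+ r) / (r`!)%:R.

End BCHDefs.

(* Main.v *)
Require Import Defs.
From HB Require Import structures.
From mathcomp Require Import all_boot all_order all_algebra.
From mathcomp Require Import complex.
From mathcomp Require Import all_classical all_reals all_analysis.
From mathcomp Require Import ring lra zify.
Import Order.TTheory GRing.Theory Num.Theory.
Local Open Scope ring_scope.
Set Implicit Arguments. Unset Strict Implicit. Unset Printing Implicit Defensive.

Section Norms.
Variable R : realType.
Local Notation C := (R[i]).

Lemma cs (J : finType) (a b : J -> R) :
  (\sum_j a j * b j) ^+ 2 <= (\sum_j a j ^+ 2) * (\sum_j b j ^+ 2).
Proof.
have H0 : 0 <= \sum_i \sum_j (a i * b j - a j * b i) ^+ 2.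
  by apply: sumr_ge0 => i _; apply: sumr_ge0 => j _; apply: sqr_ge0.
have E : \sum_i \sum_j (a i * b j - a j * b i) ^+ 2 =
   \sum_i \sum_j (a i ^+ 2 * b j ^+ 2) + \sum_i \sum_j (a j ^+ 2 * b i ^+ 2)
   - 2 * \sum_i \sum_j (a i * b i * (a j * b j)).
  rewrite mulr_sumr -big_split -sumrB /=; apply: eq_bigr => i _.
  rewrite mulr_sumr -big_split -sumrB /=; apply: eq_bigr => j _; ring.
have E3 : \sum_i \sum_j (a j ^+ 2 * b i ^+ 2) = \sum_i \sum_j (a i ^+ 2 * b j ^+ 2).
  by rewrite exchange_big.
rewrite E E3 in H0.
have E1 : \sum_i \sum_j (a i ^+ 2 * b j ^+ 2) = (\sum_j a j ^+ 2) * (\sum_j b j ^+ 2).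
  by rewrite mulr_suml; apply: eq_bigr => i _; rewrite mulr_sumr.
have E2 : \sum_i \sum_j (a i * b i * (a j * b j)) = (\sum_j a j * b j) ^+ 2.
  by rewrite expr2 mulr_suml; apply: eq_bigr => i _; rewrite mulr_sumr.
rewrite E1 E2 in H0; lra.
Qed.

Definition cabs (z : C) : R := Num.sqrt (cabs2 z).

Lemma cabs2_ge0 (z : C) : 0 <= cabs2 z.
Proof. by rewrite /cabs2 addr_ge0 // sqr_ge0. Qed.

Lemma cabs2E (z : C) : cabs2 z = cabs z ^+ 2.
Proof. by rewrite /cabs sqr_sqrtr // cabs2_ge0. Qed.

Lemma cabsE (z : C) : cabs z = ComplexField.Normc.normc z.
Proof. by case: z. Qed.

Lemma cabs_ge0 z : 0 <= cabs z. Proof. exact: sqrtr_ge0. Qed.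

Lemma cabsM a b : cabs (a * b) = cabs a * cabs b.
Proof. by rewrite !cabsE ComplexField.Normc.normcM. Qed.

Definition mn2 m n (A : 'M[C]_(m, n)) : R := \sum_i \sum_j cabs2 (A i j).
Definition mn m n (A : 'M[C]_(m, n)) : R := Num.sqrt (mn2 A).

Lemma mn2_ge0 m n (A : 'M[C]_(m, n)) : 0 <= mn2 A.
Proof. by apply: sumr_ge0 => i _; apply: sumr_ge0 => j _; apply: cabs2_ge0. Qed.

Lemma mn_ge0 m n (A : 'M[C]_(m, n)) : 0 <= mn A.
Proof. exact: sqrtr_ge0. Qed.

Lemma mn2E m n (A : 'M[C]_(m, n)) : mn2 A = mn A ^+ 2.
Proof. by rewrite /mn sqr_sqrtr // mn2_ge0. Qed.

Definition ip m n (A B : 'M[C]_(m, n)) : R :=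
  \sum_i \sum_j (complex.Re (A i j) * complex.Re (B i j) + complex.Im (A i j) * complex.Im (B i j)).

Lemma ip_le m n (A B : 'M[C]_(m, n)) : ip A B <= mn A * mn B.
Proof.
pose a (p : ('I_m * 'I_n) * bool) :=
  if p.2 then complex.Re (A p.1.1 p.1.2) else complex.Im (A p.1.1 p.1.2).
pose b (p : ('I_m * 'I_n) * bool) :=
  if p.2 then complex.Re (B p.1.1 p.1.2) else complex.Im (B p.1.1 p.1.2).
have H := cs a b.
have Ex : forall F : ('I_m * 'I_n) * bool -> R, \sum_p F p =
     \sum_i \sum_j (F ((i, j), true) + F ((i, j), false)).
  move=> F; rewrite [LHS](eq_bigr (fun p => F (p.1, p.2))); last by case.
  rewrite -(pair_bigA _ (fun x b => F (x, b))) /=.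
  rewrite [LHS](eq_bigr (fun p => \sum_b F ((p.1, p.2), b))); last by case.
  rewrite -(pair_bigA _ (fun i j => \sum_b F ((i, j), b))) /=.
  by apply: eq_bigr => i _; apply: eq_bigr => j _; rewrite big_bool.
rewrite !Ex /a /b /= in H.
have HA : \sum_i \sum_j (complex.Re (A i j) ^+ 2 + complex.Im (A i j) ^+ 2) = mn A ^+ 2 by rewrite -mn2E.
have HB : \sum_i \sum_j (complex.Re (B i j) ^+ 2 + complex.Im (B i j) ^+ 2) = mn B ^+ 2 by rewrite -mn2E.
rewrite HA HB -/(ip A B) -exprMn in H.
have := mn_ge0 A; have := mn_ge0 B => h1 h2.
have h3 : 0 <= mn A * mn B by rewrite mulr_ge0.
case: (lerP (ip A B) 0) => h; first by lra.
by rewrite -(ler_pXn2r (n := 2)) // nnegrE ?ltW.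
Qed.

Lemma mnD m n (A B : 'M[C]_(m, n)) : mn (A + B) <= mn A + mn B.
Proof.
have E : mn2 (A + B) = mn2 A + mn2 B + 2 * ip A B.
  rewrite /mn2 /ip mulr_sumr -!big_split /=; apply: eq_bigr => i _.
  rewrite mulr_sumr -!big_split /=; apply: eq_bigr => j _.
  rewrite !mxE /cabs2; case: (A i j) => a1 a2; case: (B i j) => b1 b2 /=; ring.
have := ip_le A B; rewrite !mn2E in E => h.
have h1 := mn_ge0 A; have h2 := mn_ge0 B; have h3 := mn_ge0 (A + B).
rewrite -(ler_pXn2r (n := 2)) ?nnegrE ?addr_ge0 // E; nra.
Qed.


Lemma cabs2_ge0' (z : C) : 0 <= cabs2 z. Proof. exact: cabs2_ge0. Qed.

Lemma sq_le (x y : R) : 0 <= x -> 0 <= y -> x ^+ 2 <= y ^+ 2 -> x <= y.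
Proof. by move=> hx hy; rewrite (ler_pXn2r (n := 2)) ?nnegrE. Qed.

Lemma mnN m n (A : 'M[C]_(m, n)) : mn (- A) = mn A.
Proof.
rewrite /mn /mn2; congr Num.sqrt; apply: eq_bigr => i _; apply: eq_bigr => j _.
by rewrite !mxE /cabs2; case: (A i j) => a b /=; rewrite !sqrrN.
Qed.

Lemma mnZ m n (c : C) (A : 'M[C]_(m, n)) : mn (c *: A) = cabs c * mn A.
Proof.
rewrite /mn /cabs -sqrtrM ?cabs2_ge0 //; congr Num.sqrt; rewrite /mn2 mulr_sumr.
apply: eq_bigr => i _; rewrite mulr_sumr; apply: eq_bigr => j _.
by rewrite !mxE /cabs2; case: (A i j) => a b; case: c => c1 c2 /=; ring.
Qed.

Lemma mn0 m n : mn (0 : 'M[C]_(m, n)) = 0.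
Proof.
rewrite /mn /mn2 big1 ?sqrtr0 // => i _; rewrite big1 // => j _.
by rewrite mxE /cabs2 /= expr0n /= addr0.
Qed.

Lemma mnB m n (A B : 'M[C]_(m, n)) : mn (A - B) <= mn A + mn B.
Proof. by rewrite -(mnN B) mnD. Qed.

Lemma mn_sum m n (I : Type) (s : seq I) (P : pred I) (F : I -> 'M[C]_(m, n)) :
  mn (\sum_(k <- s | P k) F k) <= \sum_(k <- s | P k) mn (F k).
Proof.
apply: (big_ind2 (fun A x => mn A <= x)); first by rewrite mn0.
  by move=> A1 x1 A2 x2 h1 h2; apply: le_trans (mnD _ _) _; apply: lerD.
by [].
Qed.

Lemma cabs_real (x : R) : cabs (x%:C)%C = `|x|.
Proof. by rewrite /cabs /cabs2 /= expr0n /= addr0 sqrtr_sqr. Qed.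

Lemma entry_le n (v : 'cV[C]_n) j : cabs (v j 0) <= mn v.
Proof.
rewrite /cabs /mn ler_sqrt ?mn2_ge0 // /mn2 (bigD1 j) //= big_ord1.
by rewrite lerDl; apply: sumr_ge0 => i _; rewrite big_ord1 cabs2_ge0.
Qed.

Lemma vnormE n (v : 'cV[C]_n) : vnorm v = mn v.
Proof. by rewrite /vnorm /mn /mn2; congr Num.sqrt; apply: eq_bigr => i _; rewrite big_ord1. Qed.

Lemma mulmx_col m n (A : 'M[C]_(m, n)) (v : 'cV[C]_n) :
  A *m v = \sum_j v j 0 *: col j A.
Proof.
apply/matrixP => i k; rewrite (ord1 k) !mxE summxE; apply: eq_bigr => j _.
by rewrite !mxE mulrC.
Qed.

Definition KA m n (A : 'M[C]_(m, n)) := \sum_(j < n) mn (col j A).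

Lemma KA_bound m n (A : 'M[C]_(m, n)) (v : 'cV[C]_n) : mn (A *m v) <= KA A * mn v.
Proof.
rewrite mulmx_col /KA mulr_suml; apply: le_trans (mn_sum _ _ _) _.
apply: ler_sum => j _; rewrite mnZ mulrC ler_wpM2l ?mn_ge0 //; exact: entry_le.
Qed.

Lemma KA_ge0 m n (A : 'M[C]_(m, n)) : 0 <= KA A.
Proof. by apply: sumr_ge0 => j _; apply: mn_ge0. Qed.

Local Open Scope classical_set_scope.

Lemma opn_has_ub n (A : 'M[C]_n) :
  has_ubound [set vnorm (A *m v) | v in [set v : 'cV[C]_n | vnorm v <= 1]].
Proof.
exists (KA A) => _ [v hv <-]; rewrite vnormE; apply: le_trans (KA_bound _ _) _.
rewrite /= vnormE in hv; rewrite -[leRHS]mulr1 ler_wpM2l ?KA_ge0 //.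
Qed.

Lemma opn_ne0 n (A : 'M[C]_n) :
  [set vnorm (A *m v) | v in [set v : 'cV[C]_n | vnorm v <= 1]] !=set0.
Proof. by exists (vnorm (A *m 0)); exists 0 => //=; rewrite vnormE mn0. Qed.

Lemma opn_ge0 n (A : 'M[C]_n) : 0 <= opnorm A.
Proof.
have h := ub_le_sup (opn_has_ub A).
have -> : (0 : R) = vnorm (A *m 0) by rewrite mulmx0 vnormE mn0.
by apply: h; exists 0 => //=; rewrite vnormE mn0.
Qed.

Lemma opn_ub n (A : 'M[C]_n) (v : 'cV[C]_n) : mn (A *m v) <= opnorm A * mn v.
Proof.
have h := ub_le_sup (opn_has_ub A).
have [hv|hv] := eqVneq (mn v) 0.
  have := KA_bound A v; rewrite hv mulr0 => h1.
  by rewrite mulr0; apply: le_trans h1 _.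
have hp : 0 < mn v by rewrite lt0r hv mn_ge0.
pose c : C := (((mn v)^-1)%:C)%C.
have hc : cabs c = (mn v)^-1 by rewrite cabs_real ger0_norm // invr_ge0 mn_ge0.
have : vnorm (A *m (c *: v)) <= opnorm A.
  apply: h; exists (c *: v) => //=; rewrite vnormE mnZ hc mulVf //.
rewrite vnormE -scalemxAr mnZ hc => h2.
by rewrite -ler_pdivrMr // mulrC.
Qed.

Lemma opn_le n (A : 'M[C]_n) K :
  0 <= K -> (forall v : 'cV[C]_n, mn (A *m v) <= K * mn v) -> opnorm A <= K.
Proof.
move=> hK hA; apply: ge_sup; first exact: opn_ne0.
move=> _ [v hv <-]; rewrite vnormE; apply: le_trans (hA v) _.
rewrite /= vnormE in hv; by rewrite -[leRHS]mulr1 ler_wpM2l.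
Qed.


Lemma opn_mul n (A B : 'M[C]_n) : opnorm (A *m B) <= opnorm A * opnorm B.
Proof.
apply: opn_le; first by rewrite mulr_ge0 ?opn_ge0.
move=> v; rewrite -mulmxA; apply: le_trans (opn_ub _ _) _.
by rewrite -mulrA ler_wpM2l ?opn_ge0 ?opn_ub.
Qed.

Lemma opn_sub n (A B : 'M[C]_n) : opnorm (A - B) <= opnorm A + opnorm B.
Proof.
apply: opn_le; first by rewrite addr_ge0 ?opn_ge0.
move=> v; rewrite mulmxBl; apply: le_trans (mnB _ _) _.
by rewrite mulrDl lerD ?opn_ub.
Qed.

Lemma opn_opp n (A : 'M[C]_n) : opnorm (- A) <= opnorm A.
Proof.
apply: opn_le; first by rewrite opn_ge0.
by move=> v; rewrite mulNmx mnN opn_ub.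
Qed.

Lemma opn_comm n (A B : 'M[C]_n) : opnorm (comm A B) <= 2 * opnorm A * opnorm B.
Proof.
rewrite /comm; apply: le_trans (opn_sub _ _) _.
apply: le_trans (lerD (opn_mul A B) (opn_mul B A)) _.
by rewrite [opnorm B * _]mulrC -mulr2n -mulrA mulr_natl.
Qed.

Lemma mn2_col m n (M : 'M[C]_(m, n)) j : mn2 (col j M) = \sum_i cabs2 (M i j).
Proof. by apply: eq_bigr => i _; rewrite big_ord1 !mxE. Qed.

Lemma mnT m n (M : 'M[C]_(m, n)) : mn M^T = mn M.
Proof.
rewrite /mn /mn2 exchange_big; congr Num.sqrt.
by apply: eq_bigr => i _; apply: eq_bigr => j _; rewrite mxE.
Qed.

Lemma col_mul' m n p (M : 'M[C]_(m, n)) (N : 'M[C]_(n, p)) j :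
  col j (M *m N) = M *m col j N.
Proof.
apply/matrixP => i k; rewrite !mxE; apply: eq_bigr => l _; by rewrite !mxE.
Qed.

Lemma mnM_gen m n p (M : 'M[C]_(m, n)) (N : 'M[C]_(n, p)) K :
  0 <= K -> (forall u : 'cV[C]_n, mn (M *m u) <= K * mn u) ->
  mn (M *m N) <= K * mn N.
Proof.
move=> hK hM; apply: sq_le; rewrite ?mulr_ge0 ?mn_ge0 //.
rewrite -mn2E exprMn -mn2E /mn2 exchange_big /= [X in _ <= _ * X]exchange_big /=.
rewrite mulr_sumr; apply: ler_sum => j _.
have := hM (col j N); rewrite -col_mul' => h.
have h2 : mn (col j (M *m N)) ^+ 2 <= K ^+ 2 * mn (col j N) ^+ 2.
  by rewrite -exprMn lerXn2r ?nnegrE ?mn_ge0 ?mulr_ge0 ?mn_ge0.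
by rewrite -!mn2E !mn2_col in h2.
Qed.

Lemma ReD' : {morph (@complex.Re R) : x y / x + y >-> x + y}.
Proof. by case=> a b; case=> c e. Qed.

Lemma ReS (I : Type) (s : seq I) (P : pred I) (F : I -> C) :
  complex.Re (\sum_(k <- s | P k) F k) = \sum_(k <- s | P k) complex.Re (F k).
Proof. exact: (big_morph _ ReD'). Qed.

Lemma trmx_bound n (B : 'M[C]_n) (u : 'cV[C]_n) :
  mn (B^T *m u) <= opnorm B * mn u.
Proof.
set w := B^T *m u.
set cw := map_mx (@conjc R) w.
set z := B *m cw.
have hcw : mn cw = mn w.
  rewrite /mn /mn2; congr Num.sqrt; apply: eq_bigr => i _; apply: eq_bigr => j _.
  by rewrite mxE /cabs2; case: (w i j) => a b /=; rewrite sqrrN.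
have hcz : mn (map_mx (@conjc R) z) = mn z.
  rewrite /mn /mn2; congr Num.sqrt; apply: eq_bigr => i _; apply: eq_bigr => j _.
  by rewrite mxE /cabs2; case: (z i j) => a b /=; rewrite sqrrN.
have E : mn2 w = ip u (map_mx (@conjc R) z).
  have E1 : mn2 w = complex.Re (\sum_k (conjc (w k 0) * w k 0)).
    rewrite ReS; apply: eq_bigr => k _; rewrite big_ord1 /cabs2.
    by case: (w k 0) => a b /=; ring.
  have E2 : ip u (map_mx (@conjc R) z) = complex.Re (\sum_i (u i 0 * z i 0)).
    rewrite ReS; apply: eq_bigr => i _; rewrite big_ord1 mxE.
    by case: (u i 0) => a b; case: (z i 0) => c e /=; ring.
  rewrite E1 E2; congr complex.Re.
  have Ez : forall i, z i 0 = \sum_k B i k * conjc (w k 0).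
    by move=> i; rewrite /z mxE; apply: eq_bigr => k _; rewrite mxE.
  have Ew : forall k, w k 0 = \sum_i B i k * u i 0.
    by move=> k; rewrite /w mxE; apply: eq_bigr => i _; rewrite mxE.
  under [RHS]eq_bigr do rewrite Ez mulr_sumr.
  rewrite exchange_big /=; apply: eq_bigr => k _.
  rewrite [X in _ * X]Ew mulr_sumr; apply: eq_bigr => i _; ring.
have h1 := ip_le u (map_mx (@conjc R) z).
have h2 := opn_ub B cw.
rewrite hcz -/z hcw in h1 h2 *.
rewrite mn2E in E.
have := mn_ge0 u; have := mn_ge0 w; have := mn_ge0 z; have := opn_ge0 B.
move=> g1 g2 g3 g4.
have h3 : mn w ^+ 2 <= opnorm B * mn u * mn w.
  rewrite E; apply: le_trans h1 _; rewrite [_ * mn u]mulrC -mulrA ler_wpM2l //.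
have [h0|h0] := eqVneq (mn w) 0.
  by rewrite h0 mulr_ge0.
have hp : 0 < mn w by rewrite lt0r h0 g3.
by rewrite -(ler_pM2r hp) -expr2.
Qed.

Lemma mnM1 n p (A : 'M[C]_n) (B : 'M[C]_(n, p)) : mn (A *m B) <= opnorm A * mn B.
Proof. apply: mnM_gen; [exact: opn_ge0 | exact: opn_ub]. Qed.

Lemma mnM2 n (A B : 'M[C]_n) : mn (A *m B) <= mn A * opnorm B.
Proof.
rewrite -mnT trmx_mul mulrC -(mnT A).
apply: mnM_gen; [exact: opn_ge0 | exact: trmx_bound].
Qed.

Lemma mn_comm1 n (A B : 'M[C]_n) : mn (comm A B) <= 2 * opnorm A * mn B.
Proof.
rewrite /comm; apply: le_trans (mnB _ _) _.
apply: le_trans (lerD (mnM1 A B) (mnM2 B A)) _.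
by rewrite le_eqVlt; apply/orP; left; apply/eqP; ring.
Qed.

Lemma mn_comm2 n (A B : 'M[C]_n) : mn (comm A B) <= 2 * mn A * opnorm B.
Proof.
rewrite /comm; apply: le_trans (mnB _ _) _.
apply: le_trans (lerD (mnM2 A B) (mnM1 B A)) _.
by rewrite le_eqVlt; apply/orP; left; apply/eqP; ring.
Qed.

End Norms.

Section Lnc0.
Variable R : realType.
Local Notation C := (R[i]).

Lemma zmod4 m n (x1 x2 y1 y2 : 'M[C]_(m, n)) : x1 - x2 - (y1 - y2) = x1 - y1 - (x2 - y2).
Proof. by apply/matrixP => i j; rewrite !mxE; ring. Qed.

Section Lnc.
Variable d : nat.
Local Notation M := ('M[C]_d).

Lemma opn0 : opnorm (0 : M) = 0.
Proof.
apply/eqP; rewrite eq_le opn_ge0 andbT; apply: opn_le => // v.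
by rewrite mul0mx mn0 mul0r.
Qed.

Lemma commBl (a b T : M) : comm (a - b) T = comm a T - comm b T.
Proof. by rewrite /comm mulmxBl mulmxBr zmod4. Qed.

Lemma commBr (z a b : M) : comm z (a - b) = comm z a - comm z b.
Proof. by rewrite /comm mulmxBl mulmxBr zmod4. Qed.

Lemma lnc_cons (z : M) t : t != [::] -> lnc (z :: t) = comm z (lnc t).
Proof. by case: t. Qed.

Lemma lnc_lin (p s : seq M) (a b : M) :
  lnc (p ++ a :: s) - lnc (p ++ b :: s) = lnc (p ++ (a - b) :: s).
Proof.
elim: p => [|z p IH].
  by case: s => [|z s] //=; rewrite commBl.
have ne : forall c, p ++ c :: s != [::] by move=> c; case: (p).
by rewrite !cat_cons !lnc_cons ?ne // -commBr IH.
Qed.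


Lemma lnc_op (K : R) (s : seq M) : 0 <= K ->
  (forall z, z \in s -> opnorm z <= K) ->
  opnorm (lnc s) <= (2 * K) ^+ (size s).-1 * K.
Proof.
move=> hK; elim: s => [|z t IH] hs.
  by rewrite /= opn0 mulr_ge0 // exprn_ge0 // mulr_ge0.
case: t IH hs => [|y t] IH hs.
  by rewrite /= expr0 mul1r; apply: hs; rewrite mem_head.
rewrite lnc_cons //; apply: le_trans (opn_comm _ _) _.
have h1 : opnorm z <= K by apply: hs; rewrite mem_head.
have h2 : opnorm (lnc (y :: t)) <= (2 * K) ^+ (size (y :: t)).-1 * K.
  by apply: IH => w hw; apply: hs; rewrite inE hw orbT.
have h3 : 2 * opnorm z * opnorm (lnc (y :: t)) <= 2 * K * ((2 * K) ^+ (size (y :: t)).-1 * K).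
  apply: ler_pM => //; rewrite ?mulr_ge0 ?opn_ge0 //; by rewrite ler_pM2l.
apply: le_trans h3 _; rewrite /= exprS le_eqVlt; apply/orP; left; apply/eqP; ring.
Qed.

Lemma lnc_F (K : R) (S : M) (p q : seq M) : 0 <= K ->
  (forall z, z \in p -> opnorm z <= K) -> (forall z, z \in q -> opnorm z <= K) ->
  mn (lnc (p ++ S :: q)) <= (2 * K) ^+ (size p + size q) * mn S.
Proof.
move=> hK; elim: p => [|z p IH] hp hq.
  case: q hq => [|y q] hq; first by rewrite /= expr0 mul1r.
  rewrite cat0s lnc_cons //; apply: le_trans (mn_comm2 _ _) _.
  have h2 := lnc_op hK hq.
  have h3 : 2 * mn S * opnorm (lnc (y :: q)) <= 2 * mn S * ((2 * K) ^+ (size (y :: q)).-1 * K).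
    by rewrite ler_wpM2l ?mulr_ge0 ?mn_ge0.
  apply: le_trans h3 _; rewrite /= add0n exprS le_eqVlt; apply/orP; left; apply/eqP; ring.
have ne : p ++ S :: q != [::] by case: (p).
rewrite cat_cons lnc_cons //; apply: le_trans (mn_comm1 _ _) _.
have h1 : opnorm z <= K by apply: hp; rewrite mem_head.
have h2 : mn (lnc (p ++ S :: q)) <= (2 * K) ^+ (size p + size q) * mn S.
  apply: IH; last exact: hq.
  by move=> w hw; apply: hp; rewrite inE hw orbT.
have h3 : 2 * opnorm z * mn (lnc (p ++ S :: q)) <= 2 * K * ((2 * K) ^+ (size p + size q) * mn S).
  apply: ler_pM => //; rewrite ?mulr_ge0 ?opn_ge0 ?mn_ge0 //; by rewrite ler_pM2l.
apply: le_trans h3 _; rewrite /= addSn exprS le_eqVlt; apply/orP; left; apply/eqP; ring.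
Qed.

Definition phi (X Y : M) (z : M) := if z == Y then - X else z.

Lemma tel (K : R) (X Y : M) : 0 <= K -> opnorm X <= K -> opnorm Y <= K ->
  forall s p, (forall z, z \in p -> opnorm z <= K) ->
  (forall z, z \in s -> (z == X) || (z == Y)) ->
  mn (lnc (p ++ s) - lnc (p ++ map (phi X Y) s)) <=
    (size s)%:R * (2 * K) ^+ (size p + size s).-1 * mn (X + Y).
Proof.
move=> hK hX hY; elim => [|a s IH] p hp hs.
  by rewrite /= subrr mn0 !mul0r.
have hXY : forall w, (w == X) || (w == Y) -> opnorm w <= K.
  by move=> w /orP [] /eqP ->.
have hph : forall w, (w == X) || (w == Y) -> opnorm (phi X Y w) <= K.
  move=> w hw; rewrite /phi; case: ifP => _; last exact: hXY.
  by apply: le_trans (opn_opp _) _.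
have ha : (a == X) || (a == Y) by apply: hs; rewrite mem_head.
have hs' : forall z, z \in s -> (z == X) || (z == Y).
  by move=> z hz; apply: hs; rewrite inE hz orbT.
have hphs : forall z, z \in map (phi X Y) s -> opnorm z <= K.
  by move=> z /mapP [w hw ->]; apply: hph; apply: hs'.
have e : lnc (p ++ a :: s) - lnc (p ++ map (phi X Y) (a :: s)) =
  (lnc (rcons p a ++ s) - lnc (rcons p a ++ map (phi X Y) s)) +
  (lnc (p ++ a :: map (phi X Y) s) - lnc (p ++ phi X Y a :: map (phi X Y) s)).
  by rewrite !cat_rcons [RHS]addrA subrK.
rewrite e; apply: le_trans (mnD _ _) _; rewrite lnc_lin.
have hp' : forall z, z \in rcons p a -> opnorm z <= K.
  by move=> z; rewrite mem_rcons inE => /orP [/eqP ->|]; [exact: hXY | exact: hp].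
have h1 := IH (rcons p a) hp' hs'.
rewrite size_rcons addSn /= in h1.
have h2 := lnc_F (a - phi X Y a) hK hp hphs.
rewrite size_map in h2.
have h3 : mn (a - phi X Y a) <= mn (X + Y).
  rewrite /phi; case: ifP => [/eqP ->|_]; first by rewrite opprK addrC.
  by rewrite subrr mn0 mn_ge0.
have h4 : (2 * K) ^+ (size p + size s) * mn (a - phi X Y a) <=
          (2 * K) ^+ (size p + size s) * mn (X + Y).
  by rewrite ler_wpM2l // exprn_ge0 // mulr_ge0.
apply: le_trans (lerD h1 (le_trans h2 h4)) _.
rewrite /= addnS /= -addn1 natrD le_eqVlt; apply/orP; left; apply/eqP; ring.
Qed.

Lemma comm_pm (X : M) u c : (u == X) || (u == - X) -> comm u (c *: X) = 0.
Proof.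
move=> /orP [] /eqP ->; rewrite /comm.
  by rewrite -scalemxAr -scalemxAl subrr.
by rewrite mulNmx mulmxN -scalemxAr -scalemxAl subrr.
Qed.

Lemma lnc_pm (X : M) t : (forall z, z \in t -> (z == X) || (z == - X)) ->
  exists c : C, lnc t = c *: X.
Proof.
elim: t => [|z t IH] h; first by exists 0; rewrite scale0r.
case: t IH h => [|y t] IH h.
  have := h z (mem_head _ _); case/orP => /eqP ->; first by exists 1; rewrite scale1r.
  by exists (-1); rewrite scaleN1r.
have [c hc] : exists c : C, lnc (y :: t) = c *: X.
  by apply: IH => w hw; apply: h; rewrite inE hw orbT.
exists 0; rewrite scale0r lnc_cons // hc comm_pm //; apply: h; exact: mem_head.
Qed.

Lemma lnc_vanish (X : M) t : (1 < size t)%N ->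
  (forall z, z \in t -> (z == X) || (z == - X)) -> lnc t = 0.
Proof.
case: t => [|z [|y t]] //= _ h.
have [c hc] : exists c : C, lnc (y :: t) = c *: X.
  by apply: lnc_pm => w hw; apply: h; rewrite inE hw orbT.
by rewrite -/(lnc (z :: y :: t)) lnc_cons // hc comm_pm //; apply: h; exact: mem_head.
Qed.

Lemma word_bound (K : R) (X Y : M) s : 0 <= K -> opnorm X <= K -> opnorm Y <= K ->
  (forall z, z \in s -> (z == X) || (z == Y)) -> (1 < size s)%N ->
  mn (lnc s) <= (size s)%:R * (2 * K) ^+ (size s).-1 * mn (X + Y).
Proof.
move=> hK hX hY hs h2.
have hp0 : forall z, z \in ([::] : seq M) -> opnorm z <= K.
  move=> z; rewrite in_nil => hz; exact: (False_ind _ (Bool.diff_false_true hz)).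
have := tel hK hX hY hp0 hs.
rewrite !cat0s add0n (lnc_vanish (X := X) (t := map (phi X Y) s)) ?subr0 ?size_map //.
move=> z /mapP [w hw ->]; rewrite /phi; case: ifP => hwY; first by rewrite eqxx orbT.
by have := hs w hw; rewrite hwY orbF => ->.
Qed.

End Lnc.
End Lnc0.

Section Comb.
Variable R : realType.

Definition Tp (r : nat) : {poly R} := \sum_(a < r.+1) ((a`!%:R)^-1 : R) *: 'X^a.

Lemma fact_neq0 k : (k`!%:R : R) != 0.
Proof. by rewrite pnatr_eq0 -lt0n fact_gt0. Qed.

Lemma coefT r k : (k <= r)%N -> (Tp r)`_k = (k`!%:R)^-1.
Proof.
move=> hk; rewrite /Tp coef_sumMXn.
have hk' : (k < r.+1)%N by [].
by rewrite (big_pred1 (Ordinal hk')).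
Qed.

Lemma coefTm r m k : (k <= r)%N -> ((Tp r) ^+ m)`_k = (m%:R ^+ k) / k`!%:R.
Proof.
elim: m k => [|m IH] k hk.
  rewrite expr0 coef1 expr0n; case: k hk => [|k] hk /=.
    by rewrite fact0 invr1 mulr1.
  by rewrite mul0r.
rewrite exprSr coefM.
have E : \sum_(j < k.+1) (Tp r ^+ m)`_j * (Tp r)`_(k - j) =
         \sum_(j < k.+1) ((1 ^+ (k - j) * m%:R ^+ j) *+ 'C(k, j)) / k`!%:R.
  apply: eq_bigr => j _.
  have hj : (j <= k)%N by rewrite -ltnS.
  rewrite IH ?(leq_trans hj hk) // coefT; last by apply: leq_trans (leq_subr _ _) hk.
  have hb : (k`!%:R : R) = 'C(k, j)%:R * (j`!%:R * (k - j)`!%:R).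
    by rewrite -!natrM bin_fact.
  have hc : ('C(k, j)%:R : R) != 0 by rewrite pnatr_eq0 -lt0n bin_gt0.
  rewrite hb expr1n mul1r -mulr_natr; field.
  by rewrite hc !fact_neq0.
rewrite E -mulr_suml -exprDn.
by rewrite -natr1 addrC.
Qed.

Lemma TT r : Tp r * Tp r = \sum_(p : 'I_r.+1 * 'I_r.+1)
   (((p.1`!%:R)^-1 * (p.2`!%:R)^-1) : R) *: 'X^(p.1 + p.2).
Proof.
rewrite /Tp big_distrl /=.
rewrite -(pair_bigA _ (fun a b : 'I_r.+1 => (((a`!%:R)^-1 * (b`!%:R)^-1) : R) *: 'X^(a + b))) /=.
apply: eq_bigr => a _; rewrite big_distrr /=; apply: eq_bigr => b _.
by rewrite -scalerAl -scalerAr scalerA exprD.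
Qed.

Lemma comb r n :
  \sum_(f : {ffun 'I_n -> 'I_r.+1 * 'I_r.+1} | bch_adm f)
     (\prod_(i < n) (((f i).1)`!%:R * ((f i).2)`!%:R) : R)^-1
  <= ((2 * n)%:R ^+ r) / (r`!)%:R.
Proof.
have E1 : ((Tp r) ^+ (2 * n))`_r = \sum_(f : {ffun 'I_n -> 'I_r.+1 * 'I_r.+1} |
     ((\sum_(i < n) ((f i).1 + (f i).2))%N == r))
     \prod_(i < n) (((((f i).1)`!%:R)^-1 * (((f i).2)`!%:R)^-1) : R).
  rewrite exprM expr2.
  have -> : (Tp r * Tp r) ^+ n = \prod_(i < n) (Tp r * Tp r) by rewrite prodr_const card_ord.
  rewrite TT bigA_distr_bigA /=.
  have E2 : forall f : {ffun 'I_n -> 'I_r.+1 * 'I_r.+1},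
     \prod_(i < n) ((((((f i).1)`!%:R)^-1 * (((f i).2)`!%:R)^-1) : R) *: 'X^((f i).1 + (f i).2))
     = (\prod_(i < n) (((((f i).1)`!%:R)^-1 * (((f i).2)`!%:R)^-1) : R)) *:
        'X^(\sum_(i < n) ((f i).1 + (f i).2))%N.
    move=> f; rewrite -mul_polyC rmorph_prod -prodrXr -big_split /=.
    by apply: eq_bigr => i _; rewrite mul_polyC.
  rewrite (eq_bigr _ (fun f _ => E2 f)) coef_sumMXn; apply: eq_bigl => f.
  by [].
rewrite coefTm // in E1.
rewrite E1 [leRHS]big_mkcond [leLHS]big_mkcond /=; apply: ler_sum => f _.
case: ifP => hf.
  have -> : ((\sum_(i < n) ((f i).1 + (f i).2))%N == r) by case/andP: hf.
  by rewrite -prodfV le_eqVlt; apply/orP; left; apply/eqP; apply: eq_bigr => i _; rewrite invfM.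
case: ifP => // _; apply: prodr_ge0 => i _; by rewrite mulr_ge0 // invr_ge0 ler0n.
Qed.



Lemma sum_const_pos r (c : R) : \sum_(n < r.+1 | (0 < n)%N) c = c *+ r.
Proof.
rewrite big_mkcond big_ord_recl /= add0r.
by rewrite (eq_bigr (fun _ => c)) // sumr_const card_ord.
Qed.

Lemma sum_n r : (1 <= r)%N ->
  \sum_(n < r.+1 | (0 < n)%N) ((n%:R : R)^-1 * ((2 * n)%:R ^+ r / (r`!)%:R))
  <= (2 : R) ^+ r * r%:R ^+ r / (r`!)%:R.
Proof.
move=> hr.
have hx : forall x : R, x ^+ r = x * x ^+ r.-1 by move=> x; rewrite -exprS prednK.
apply: (@le_trans _ _ (\sum_(n < r.+1 | (0 < n)%N) ((2 : R) ^+ r * r%:R ^+ r.-1 / (r`!)%:R))).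
  apply: ler_sum => n hn.
  have hnr : (n <= r)%N by rewrite -ltnS.
  have hn0 : (n%:R : R) != 0 by rewrite pnatr_eq0 -lt0n.
  have E : (n%:R : R)^-1 * ((2 * n)%:R ^+ r / (r`!)%:R) = 2 ^+ r * n%:R ^+ r.-1 / (r`!)%:R.
    rewrite natrM exprMn (hx n%:R); field; by rewrite fact_neq0 hn0.
  rewrite E ler_wpM2r ?invr_ge0 ?ler0n // ler_wpM2l ?exprn_ge0 //.
  by rewrite lerXn2r ?nnegrE ?ler0n // ler_nat.
rewrite sum_const_pos -mulr_natr.
rewrite (hx r%:R) le_eqVlt; apply/orP; left; apply/eqP.
field; by rewrite fact_neq0.
Qed.

Lemma Cconst_le r : (1 <= r)%N -> Cconst R r <= (4 * expR 1) ^+ r.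
Proof.
move=> hr; rewrite /Cconst exprMn.
have h1 : (2 : R) ^+ (2 * r).-1 <= 4 ^+ r.
  have -> : (4 : R) = 2 ^+ 2 by rewrite expr2; rewrite -natrM.
  rewrite -exprM; apply: ler_weXn2l; first by rewrite ler1n.
  by rewrite leq_pred.
have h2 : r%:R ^+ r / (r`!)%:R <= expR (1 : R) ^+ r.
  rewrite -expRM_natl mulr1.
  have := expR_ge1Dxn (r.-1) (ler0n R r).
  rewrite prednK //; apply: le_trans; rewrite lerDr //.
rewrite -mulrA; apply: (ler_pM _ _ h1 h2); first by rewrite exprn_ge0.
by rewrite mulr_ge0 ?invr_ge0 ?exprn_ge0 ?ler0n.
Qed.

End Comb.

Section Main.
Variable R : realType.
Local Notation C := (R[i]).

Lemma cabs_nat k : cabs (k%:R : C) = k%:R.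
Proof.
rewrite -(rmorph_nat (@real_complex_def R (Phant R)) k) cabs_real.
by rewrite ger0_norm ?ler0n.
Qed.

Lemma cabsV (x : C) : cabs x^-1 = (cabs x)^-1.
Proof. by rewrite !cabsE ComplexField.Normc.normcV. Qed.

Lemma cabs_sign k : cabs ((-1) ^+ k : C) = 1.
Proof.
elim: k => [|k IH]; first by rewrite expr0 (cabs_nat 1).
rewrite exprS cabsM IH mulr1 /cabs /cabs2 /=.
by rewrite sqrrN expr1n oppr0 expr0n /= addr0 sqrtr1.
Qed.

Lemma frobNE d (A : 'M[C]_d) : frobN A = mn A * Num.sqrt ((d%:R : R)^-1).
Proof. by rewrite /frobN /mn -sqrtrM ?mn2_ge0. Qed.

Lemma word_mem d n r (X Y : 'M[C]_d) (f : {ffun 'I_n -> 'I_r.+1 * 'I_r.+1}) z :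
  z \in bch_word X Y f -> (z == X) || (z == Y).
Proof.
rewrite /bch_word => /flattenP [s /mapP [i _ ->]].
by rewrite mem_cat => /orP [] ; rewrite mem_nseq => /andP [_ ->]; rewrite ?orbT.
Qed.

Lemma word_size d n r (X Y : 'M[C]_d) (f : {ffun 'I_n -> 'I_r.+1 * 'I_r.+1}) :
  size (bch_word X Y f) = (\sum_(i < n) ((f i).1 + (f i).2))%N.
Proof.
rewrite /bch_word size_flatten /shape -map_comp sumnE big_map.
rewrite big_enum /=; apply: eq_bigr => i _ /=.
by rewrite size_cat !size_nseq.
Qed.


Lemma sum_I2 (V : zmodType) (G : 'I_2 * 'I_2 -> V) :
  \sum_p G p = G (ord0, ord0) + G (ord0, ord_max) + (G (ord_max, ord0) + G (ord_max, ord_max)).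
Proof.
rewrite [LHS](eq_bigr (fun p => G (p.1, p.2))); last by case.
rewrite -(pair_bigA _ (fun a b => G (a, b))) /= !big_ord_recl !big_ord0 !addr0.
have -> : lift ord0 ord0 = ord_max :> 'I_2 by apply: val_inj.
by [].
Qed.

Lemma adm1 (t : 'I_2 * 'I_2) :
  bch_adm ([ffun => t] : {ffun 'I_1 -> 'I_2 * 'I_2}) = ((t.1 + t.2)%N == 1%N).
Proof.
rewrite /bch_adm big_ord1 ffunE; case: eqP => h; last by rewrite andbF.
by rewrite andbT; apply/forallP => i; rewrite ffunE h.
Qed.

Lemma enum1 : enum 'I_1 = [:: ord0].
Proof. by apply: (inj_map val_inj); rewrite val_enum_ord. Qed.

Lemma BCH1 d (X Y : 'M[C]_d) : BCH 1 X Y = X + Y.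
Proof.
rewrite /BCH big_mkcond big_ord_recl /= add0r big_ord1 /=.
rewrite (reindex (fun t : 'I_2 * 'I_2 => ([ffun => t] : {ffun 'I_1 -> 'I_2 * 'I_2}))); last first.
  exists (fun f : {ffun 'I_1 -> 'I_2 * 'I_2} => f ord0) => [t _|f _]; first by rewrite ffunE.
  by apply/ffunP => i; rewrite ffunE (ord1 i).
rewrite big_mkcond sum_I2 !adm1 /=.
rewrite /bch_word enum1 /= !big_ord1 !ffunE /=.
have -> : bump 0 0 = 1%N by [].
have -> : 1`! = 1%N by [].
rewrite fact0 addn0 expr0 !mul1r ?mulr1 !invr1 ?mulr1 !scale1r add0r addr0 addrC.
by [].
Qed.


Lemma cabs1 : cabs (1 : C) = 1.
Proof. exact: (cabs_nat 1). Qed.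

Lemma cabs_prod (I : Type) (s : seq I) (P : pred I) (F : I -> C) :
  cabs (\prod_(i <- s | P i) F i) = \prod_(i <- s | P i) cabs (F i).
Proof.
elim: s => [|x s IH]; first by rewrite !big_nil cabs1.
by rewrite !big_cons; case: (P x) => //; rewrite cabsM IH.
Qed.

Lemma main_bound d (X Y : 'M[C]_d) r : (1 <= r)%N ->
  mn (BCH r X Y) <= Cconst R r * Num.max (opnorm X) (opnorm Y) ^+ r.-1 * mn (X + Y).
Proof.
move=> hr.
set K := Num.max (opnorm X) (opnorm Y).
have hX : opnorm X <= K by rewrite /K le_max; apply/orP; left; exact: lexx.
have hY : opnorm Y <= K by rewrite /K le_max; apply/orP; right; exact: lexx.
have hK : 0 <= K by apply: le_trans hX; apply: opn_ge0.
case: r hr => [//|[|r]] _.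
  rewrite BCH1 /Cconst /= mul1n expr1 expr1n mulr1 (_ : 1`! = 1%N) // invr1 mulr1 expr0 mulr1.
  have h := mn_ge0 (X + Y).
  by rewrite mulr_natl mulr2n lerDl.
set r' := r.+2.
set Z := (2 * K) ^+ r'.-1 * mn (X + Y).
have hZ : 0 <= Z by rewrite mulr_ge0 ?mn_ge0 // exprn_ge0 // mulr_ge0.
have hr0 : (r'%:R : R) != 0 by rewrite pnatr_eq0.
have hterm : forall (n : 'I_r'.+1) (f : {ffun 'I_n -> 'I_r'.+1 * 'I_r'.+1}),
   (0 < n)%N -> bch_adm f ->
   mn (((((-1) ^+ n.-1 / n%:R) / (r'%:R * \prod_(i < n) (((f i).1)`!%:R * ((f i).2)`!%:R))) : C)
         *: lnc (bch_word X Y f))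
   <= ((n%:R : R)^-1 * (\prod_(i < n) (((f i).1)`!%:R * ((f i).2)`!%:R) : R)^-1) * Z.
  move=> n f hn hf.
  have hs : size (bch_word X Y f) = r'.
    by rewrite word_size; case/andP: hf => _ /eqP.
  have hw := word_bound hK hX hY (@word_mem _ _ _ X Y f) (_ : 1 < size (bch_word X Y f))%N.
  rewrite hs in hw; have {}hw := hw erefl.
  have hn0 : (n%:R : R) != 0 by rewrite pnatr_eq0 -lt0n.
  have hP : (\prod_(i < n) (((f i).1)`!%:R * ((f i).2)`!%:R) : R) != 0.
    rewrite (eq_bigr (fun i => ((((f i).1)`! * ((f i).2)`!)%N)%:R)); last by move=> i _; rewrite natrM.
    by rewrite -natr_prod pnatr_eq0 -lt0n prodn_gt0 // => i; rewrite muln_gt0 !fact_gt0.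
  rewrite mnZ !cabsM !cabsV cabs_sign cabsM cabs_prod !cabs_nat.
  rewrite (eq_bigr (fun i => (((f i).1)`!%:R * ((f i).2)`!%:R))); last first.
    by move=> i _; rewrite cabsM !cabs_nat.
  have hP0 : 0 <= (\prod_(i < n) (((f i).1)`!%:R * ((f i).2)`!%:R) : R).
    by apply: prodr_ge0 => i _; rewrite mulr_ge0 ?ler0n.
  apply: le_trans (ler_wpM2l _ hw) _.
    by rewrite !mulr_ge0 ?invr_ge0 ?mulr_ge0 ?ler0n.
  rewrite le_eqVlt; apply/orP; left; apply/eqP; rewrite /Z; field.
  by rewrite hn0 hr0 hP.
rewrite /BCH; apply: le_trans (mn_sum _ _ _) _.
apply: (@le_trans _ _ (\sum_(n < r'.+1 | (0 < n)%N)
   ((n%:R : R)^-1 * ((2 * n)%:R ^+ r' / (r'`!)%:R)) * Z)).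
  apply: ler_sum => n hn.
  apply: le_trans (mn_sum _ _ _) _.
  apply: le_trans (ler_sum _ (fun f hf => hterm n f hn hf)) _.
  rewrite -mulr_suml -mulr_sumr ler_wpM2r // ler_wpM2l ?invr_ge0 ?ler0n //.
  exact: comb.
rewrite -mulr_suml.
have hsn := @sum_n R r' isT.
apply: le_trans (ler_wpM2r hZ hsn) _.
rewrite /Z /Cconst.
have -> : (2 * r').-1 = (r' + r'.-1)%N by rewrite /r' /=; lia.
rewrite exprD exprMn le_eqVlt; apply/orP; left; apply/eqP; ring.
Qed.

End Main.

Unset Implicit Arguments.

Theorem mainTheorem7 (R : realType) (d : nat) (X Y : 'M[R[i]]_d) :
  opnorm X + opnorm Y < ln 2 ->
  forall r : nat, (1 <= r)%N ->
    frobN (BCH r X Y) <=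
      Cconst R r * Num.max (opnorm X) (opnorm Y) ^+ r.-1 * frobN (X + Y)
    /\ Cconst R r <= (4 * expR 1) ^+ r.
Proof.
move=> _ r hr; split; last exact: Cconst_le.
rewrite !frobNE mulrA ler_wpM2r ?sqrtr_ge0 //.
exact: main_bound.
Qed.
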